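(* Let $H\in\mathbb{R}^{n\times d}$ have rank $h$, $\Sigma\in\mathbb{R}^{n\times n}$ symmetric positive definite, $y\in\mathbb{R}^n$, $J\ge2$, and let $\Gamma_i$ be the empirical covariances of deterministic EKI iterates $$v_{i+1}^{(j)}=v_i^{(j)}+\Gamma_iH^\top(H\Gamma_iH^\top+\Sigma)^{-1}(y-Hv_i^{(j)}).$$ Consider the generalized eigenvalue problem $H\Gamma_iH^\top w=\delta\,\Sigma w$, whose eigenvectors do not depend on $i$ and whose eigenvalue along an eigenvector evolves as $\delta_{\ell,i}$. Then an eigenvalue that is zero at $i=0$ is zero for all $i\ge1$, and an eigenvalue that is positive at $i=0$ is positive for all $i\ge1$. Let $r$ be the number of positive eigenvalues. There is a $\Sigma$-orthogonal basis $\{w_1,\dots,w_n\}$ of $\mathbb{R}^n$ consisting of eigenvectors of this problem such that: (1) $w_1,\dots,w_r\in\mathsf{Ran}(\Sigma^{-1}H)$ have positive eigenvalues $\delta_{1,i},\dots,\delta_{r,i}$, labeled so that $\delta_{1,1}\ge\delta_{2,1}\ge\dots\ge\delta_{r,1}>0$, and this ordering is preserved for all $i\ge1$; (2) if $r<h$, $w_{r+1},\dots,w_h\in\mathsf{Ran}(\Sigma^{-1}H)$ have eigenvalue zero; (3) if $h<n$, $w_{h+1},\dots,w_n\in\mathsf{Ker}(H^\top)$ have eigenvalue zero. Moreover $\mathsf{span}(w_1,\dots,w_h)=\mathsf{Ran}(\Sigma^{-1}H)$ and $\mathsf{span}(w_{h+1},\dots,w_n)=\mathsf{Ker}(H^\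top)$.
   Context: Empirical covariance $\Gamma_i=\frac1{J-1}\sum_j(v_i^{(j)}-\bar v_i)(v_i^{(j)}-\bar v_i)^\top$, $\bar v_i=\frac1J\sum_jv_i^{(j)}$. $\Sigma$-orthogonal means $w_k^\top\Sigma w_l=0$ for $k\ne l$. *)

(* Defs.v *)
From HB Require Import structures.
From mathcomp Require Import all_boot all_order all_algebra.
From mathcomp Require Import reals.
Set Implicit Arguments. Unset Strict Implicit. Unset Printing Implicit Defensive.
Import Order.TTheory GRing.Theory Num.Theory.
Local Open Scope ring_scope.

Section EKI.
Variable R : realType.

Definition spd (n : nat) (S : 'M[R]_n) : Prop :=
  S^T = S /\ forall x : 'cV[R]_n, x != 0 -> 0 < (x^T *m S *m x) 0 0.

Definition ens_mean (J d : nat) (v : 'I_J -> 'cV[R]_d) : 'cV[R]_d :=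
  (J%:R)^-1 *: \sum_(j < J) v j.

Definition ens_cov (J d : nat) (v : 'I_J -> 'cV[R]_d) : 'M[R]_d :=
  ((J.-1)%:R)^-1 *: \sum_(j < J) ((v j - ens_mean v) *m (v j - ens_mean v)^T).

Definition eki_step (n d J : nat) (H : 'M[R]_(n, d)) (S : 'M[R]_n) (y : 'cV[R]_n)
  (v : 'I_J -> 'cV[R]_d) : 'I_J -> 'cV[R]_d :=
  fun j => v j + ens_cov v *m H^T *m invmx (H *m ens_cov v *m H^T + S)
                   *m (y - H *m v j).

Definition eki_iter (n d J : nat) (H : 'M[R]_(n, d)) (S : 'M[R]_n) (y : 'cV[R]_n)
  (v0 : 'I_J -> 'cV[R]_d) (i : nat) : 'I_J -> 'cV[R]_d :=
  iter i (eki_step H S y) v0.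

Definition eki_Gamma (n d J : nat) (H : 'M[R]_(n, d)) (S : 'M[R]_n) (y : 'cV[R]_n)
  (v0 : 'I_J -> 'cV[R]_d) (i : nat) : 'M[R]_d :=
  ens_cov (eki_iter H S y v0 i).

End EKI.

(* Main.v *)
Require Import Defs.
From HB Require Import structures.
From mathcomp Require Import all_boot all_order all_algebra.
From mathcomp Require Import reals.
From mathcomp Require Import complex spectral.
From mathcomp Require Import zify ring lra.
From Stdlib Require Import FunctionalExtensionality.
Import Order.TTheory GRing.Theory Num.Theory.
Local Open Scope ring_scope.
Set Implicit Arguments. Unset Strict Implicit. Unset Printing Implicit Defensive.
Section CL.
Variable R : realType.
Local Notation rho := (real_complex R).

Lemma mx11_tr (T : Type) (A : 'M[T]_1) : A^T = A.
Proof. by apply/matrixP => i j; rewrite !mxE !ord1. Qed.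

Lemma conjci : (@conjc R 'i%C) = - 'i%C.
Proof. by apply/eqP; rewrite eq_complex /= oppr0 !eqxx. Qed.

Lemma conj_decomp k (x y : 'rV[R]_k) :
  map_mx (@conjc R) (map_mx rho x + 'i%C *: map_mx rho y)
  = map_mx rho x - 'i%C *: map_mx rho y.
Proof.
apply/matrixP => a b; by rewrite !mxE; simpc.

Qed.

Lemma quad_decomp k (P : 'M[R]_k) (x y : 'rV[R]_k) : P^T = P ->
  let u := map_mx rho x + 'i%C *: map_mx rho y in
  u *m map_mx rho P *m (map_mx (@conjc R) u)^T
  = map_mx rho (x *m P *m x^T + y *m P *m y^T).
Proof.
move=> sP u; rewrite /u conj_decomp.
have hyx : y *m P *m x^T = x *m P *m y^T.
  by rewrite -[LHS]mx11_tr !trmx_mul trmxK sP mulmxA.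
rewrite linearB /= linearZ /= !mulmxDl !mulmxDr !mulmxN.
rewrite -!scalemxAl -!scalemxAr ?scalerA.
have := congr1 (map_mx rho) hyx; rewrite !map_mxM -!map_trmx => ->.
have -> : 'i%C * 'i%C = -1 :> R[i] by rewrite -expr2 sqr_i.
rewrite map_mxD !map_mxM -!map_trmx scaleN1r opprK.
by rewrite addrA subrK.
Qed.

Lemma free_of_inj m n (A : 'M[R]_(m, n)) :
  (forall v : 'rV_m, v *m A = 0 -> v = 0) -> row_free A.
Proof.
move=> H; rewrite -kermx_eq0; apply/eqP/row_matrixP => i; rewrite row0.
by apply: H; rewrite -row_mul mulmx_ker row0.
Qed.

Lemma spd_row n (S : 'M[R]_n) (v : 'rV_n) : spd S -> v != 0 ->
  0 < (v *m S *m v^T) 0 0.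
Proof.
case=> _ H vn0; have := H v^T; rewrite trmxK; apply.
by apply: contra vn0 => /eqP/(congr1 trmx); rewrite trmxK linear0 => ->.
Qed.

Lemma spd_row_ge0 n (S : 'M[R]_n) (v : 'rV_n) : spd S ->
  0 <= (v *m S *m v^T) 0 0.
Proof.
move=> sS; have [->|vn0] := eqVneq v 0; last by apply/ltW/spd_row.
by rewrite !mul0mx mxE.
Qed.

Lemma spd_unit n (S : 'M[R]_n) : spd S -> S \in unitmx.
Proof.
move=> sS; rewrite -row_free_unit; apply: free_of_inj => v vS0.
apply/eqP; apply: contraT => vn0; have := spd_row sS vn0.
by rewrite vS0 mul0mx mxE ltxx.
Qed.

Lemma CL k (M S : 'M[R]_k) : (0 < k)%N -> M^T = M -> spd S ->
  exists (d : R) (c : 'rV_k), c != 0 /\ c *m M = d *: (c *m S).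
Proof.
move=> k0 sM sS; have Su := spd_unit sS.
set N := invmx S *m M.
have [l /eigenvalueP [z hz zn0]] := eigenvalue_closed (map_mx rho N) k0.
have SU : map_mx rho S \in unitmx by rewrite map_unitmx.
set u := z *m invmx (map_mx rho S).
have zu : z = u *m map_mx rho S by rewrite /u mulmxKV.
have un0 : u != 0 by apply: contra zn0 => /eqP u0; rewrite zu u0 mul0mx.
have hu : u *m map_mx rho M = l *: (u *m map_mx rho S).
  by rewrite -zu -hz /N map_mxM map_invmx mulmxA.
set x := map_mx (@complex.Re R) u; set y := map_mx (@complex.Im R) u.
have uE : u = map_mx rho x + 'i%C *: map_mx rho y.
  by apply/matrixP => a b; rewrite !mxE [LHS]complexE.
have := congr1 (fun A => A *m (map_mx (@conjc R) u)^T) hu.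
rewrite /= -scalemxAl uE !quad_decomp //; last by case: sS.
set a := x *m M *m x^T + _; set b := x *m S *m x^T + _.
move/matrixP/(_ 0 0) => h.
have hab : rho (a 0 0) = l * rho (b 0 0) by move: h; rewrite !mxE.
have bpos : 0 < b 0 0.
  have xy : (x != 0) || (y != 0).
    apply: contraT; rewrite negb_or !negbK => /andP[/eqP x0 /eqP y0].
    by move: un0; rewrite uE x0 y0 !map_mx0 scaler0 addr0 eqxx.
  rewrite /b mxE; case/orP: xy => nz.
    by apply: ltr_wpDr; [apply: spd_row_ge0 | apply: spd_row].
  by apply: ltr_wpDl; [apply: spd_row_ge0 | apply: spd_row].
have lE : l = rho (a 0 0 / b 0 0).
  have bn0 : rho (b 0 0) != 0 by rewrite -(rmorph0 rho) (inj_eq (@complexI R)) gt_eqF.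
  rewrite fmorph_div; apply: (canRL (mulfK bn0)); exact/esym.
have : eigenvalue (map_mx rho N) (rho (a 0 0 / b 0 0)).
  by apply/eigenvalueP; exists z => //; rewrite -lE.
rewrite eigenvalue_root_char -map_char_poly fmorph_root -eigenvalue_root_char.
case/eigenvalueP => c hc cn0.
exists (a 0 0 / b 0 0), (c *m invmx S); split.
  apply: contra cn0 => /eqP c0; apply/eqP.
  by rewrite -(mulmxKV Su c) c0 mul0mx.
by rewrite mulmxKV // -mulmxA -/N hc.
Qed.

Lemma spd_sym n (S : 'M[R]_n) : spd S -> S^T = S.
Proof. by case. Qed.

Lemma G n (M S : 'M[R]_n) : M^T = M -> spd S ->
 forall k m (U : 'M[R]_(m, n)), (k <= \rank U)%N -> (U *m M *m invmx S <= U)%MS ->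
 exists (w : 'I_k -> 'rV_n) (dl : 'I_k -> R),
  (forall l, w l != 0) /\ (forall l, (w l <= U)%MS) /\
  (forall l, w l *m M = dl l *: (w l *m S)) /\
  (forall l l', l != l' -> w l *m S *m (w l')^T = 0).
Proof.
move=> sM sS; have Su := spd_unit sS; have sSt := spd_sym sS.
elim=> [|k IH] m U kU inv.
  by exists (fun _ => 0), (fun _ => 0); do !split; case.
have Bf := row_base_free U; have BU := eq_row_base U.
move: (row_base U) Bf BU => B Bf BU.
set M' := B *m M *m B^T; set S' := B *m S *m B^T.
have sM' : M'^T = M' by rewrite /M' !trmx_mul trmxK sM mulmxA.
have sS' : spd S'.
  split; first by rewrite /S' !trmx_mul trmxK sSt mulmxA.
  move=> v vn0; have := @spd_row _ S (v^T *m B) sS.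
  rewrite trmx_mul trmxK /S' !mulmxA; apply.
  rewrite mulmx_free_eq0 //.
  by apply: contra vn0 => /eqP/(congr1 trmx); rewrite trmxK linear0 => ->.
have [d [c [cn0 hc]]] := CL (leq_ltn_trans (leq0n k) kU) sM' sS'.
set x := c *m B.
have xn0 : x != 0 by rewrite /x mulmx_free_eq0.
have xU : (x <= U)%MS by rewrite /x -BU submxMl.
have hx : x *m M = d *: (x *m S).
  set y := x *m M *m invmx S - d *: x.
  have yU : (y <= U)%MS.
    apply: addmx_sub; last by rewrite -scaleNr scalemx_sub.
    by apply: submx_trans inv; rewrite submxMr // submxMr.
  have yS : y *m S *m B^T = 0.
    rewrite /y mulmxBl mulmxKV // -scalemxAl mulmxBl -scalemxAl.
    have -> : c *m B *m M *m B^T = c *m M' by rewrite /M' !mulmxA.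
    have -> : c *m B *m S *m B^T = c *m S' by rewrite /S' !mulmxA.
    by rewrite hc subrr.
  have y0 : y = 0.
    have [e ye] : exists e, y = e *m B by apply/submxP; rewrite BU.
    apply/eqP; apply: contraT => yn0; have := spd_row sS yn0.
    by rewrite {2}ye trmx_mul mulmxA yS mul0mx mxE ltxx.
  move/eqP: y0; rewrite subr_eq0 => /eqP.
  by move/(congr1 (mulmx^~ S)); rewrite mulmxKV // -scalemxAl.
set K := kermx (S *m x^T).
set U' := (U :&: K)%MS.
have kU' : (k <= \rank U')%N.
  have := mxrank_sum_cap U K; rewrite mxrank_ker.
  have := rank_leq_col (U + K)%MS; have := rank_leq_col (S *m x^T).
  rewrite -/U'; lia.
have U'K : (U' *m (S *m x^T)) = 0 by apply/sub_kermxP; rewrite capmxSr.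
have inv' : (U' *m M *m invmx S <= U')%MS.
  rewrite sub_capmx; apply/andP; split.
    by apply: submx_trans inv; rewrite submxMr // submxMr // capmxSl.
  apply/sub_kermxP; rewrite mulmxA mulmxKV // -mulmxA.
  have -> : M *m x^T = d *: (S *m x^T) by rewrite -sM -trmx_mul hx linearZ /= trmx_mul sSt.
  by rewrite -scalemxAr U'K scaler0.
have [w [dl [wn0 [wU [hw ow]]]]] := IH _ U' kU' inv'.
have wK l : w l *m (S *m x^T) = 0.
  by apply/sub_kermxP; apply: submx_trans (wU l) _; rewrite capmxSr.
exists (fun l => if unlift ord0 l is Some j then w j else x).
exists (fun l => if unlift ord0 l is Some j then dl j else d).
split; first by move=> l; case: unliftP.
split; first by move=> l; case: unliftP => [j _|_ //]; apply: submx_trans (wU j) (capmxSl _ _).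
split; first by move=> l; case: unliftP.
move=> l l'; case: unliftP => [j ->|->]; case: unliftP => [j' ->|->] //.
- by move=> ne; apply: ow; apply: contra ne => /eqP ->.
- by move=> _; rewrite -mulmxA wK.
- move=> _; rewrite -[LHS]mx11_tr !trmx_mul trmxK sSt mulmxA.
  by rewrite -trmx_mul -/x -mulmxA wK.
Qed.

Lemma cov_sym J d (v : 'I_J -> 'cV[R]_d) : (ens_cov v)^T = ens_cov v.
Proof.
rewrite /ens_cov linearZ /=; congr (_ *: _); rewrite linear_sum /=.
by apply: eq_bigr => j _; rewrite trmx_mul trmxK.
Qed.

Lemma cov_psd J d (v : 'I_J -> 'cV[R]_d) (x : 'rV_d) :
  0 <= (x *m ens_cov v *m x^T) 0 0.
Proof.
rewrite /ens_cov -scalemxAr -scalemxAl mxE; apply: mulr_ge0.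
  by rewrite invr_ge0 ler0n.
rewrite mulmx_sumr mulmx_suml summxE; apply: sumr_ge0 => j _.
rewrite !mulmxA -[_ *m _ *m x^T]mulmxA -trmx_mul.
move: (x *m _) => t; rewrite mxE big_ord1 mxE.
by rewrite -expr2 sqr_ge0.
Qed.

Lemma mean_affine J d (P : 'M[R]_d) (b : 'cV_d) (v : 'I_J -> 'cV[R]_d) :
  (0 < J)%N -> ens_mean (fun j => P *m v j + b) = P *m ens_mean v + b.
Proof.
move=> J0; rewrite /ens_mean big_split /= -mulmx_sumr sumr_const card_ord.
rewrite scalerDr scalemxAr -scaler_nat scalerA mulVf ?scale1r //.
by rewrite pnatr_eq0 -lt0n.
Qed.

Lemma cov_affine J d (P : 'M[R]_d) (b : 'cV_d) (v : 'I_J -> 'cV[R]_d) :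
  (0 < J)%N -> ens_cov (fun j => P *m v j + b) = P *m ens_cov v *m P^T.
Proof.
move=> J0; rewrite /ens_cov mean_affine //.
move: (ens_mean v) (J.-1%:R^-1) => m c.
rewrite -scalemxAr -scalemxAl.
congr (_ *: _); rewrite mulmx_sumr mulmx_suml; apply: eq_bigr => j _.
have -> : P *m v j + b - (P *m m + b) = P *m (v j - m).
  by rewrite mulmxBr opprD addrACA subrr addr0.
by rewrite trmx_mul !mulmxA.
Qed.

Lemma C_unit n d (H : 'M[R]_(n,d)) (S : 'M_n) (G : 'M_d) : spd S ->
  (forall x : 'rV_d, 0 <= (x *m G *m x^T) 0 0) -> (H *m G *m H^T + S) \in unitmx.
Proof.
move=> sS pG; rewrite -row_free_unit; apply: free_of_inj => v vC.
apply/eqP; apply: contraT => vn0.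
have := congr1 (fun X => (X *m v^T) 0 0) vC; rewrite /= mul0mx [X in _ = X]mxE.
rewrite mulmxDr mulmxDl [X in X = _]mxE !mulmxA.
have := pG (v *m H); rewrite trmx_mul !mulmxA => h1.
have h2 := spd_row sS vn0; move=> h.
by move: (ltr_wpDl h1 h2); rewrite h ltxx.
Qed.

Lemma A_step n d (H : 'M[R]_(n,d)) (S : 'M_n) (G : 'M_d) : spd S -> G^T = G ->
  (forall x : 'rV_d, 0 <= (x *m G *m x^T) 0 0) ->
  let C := H *m G *m H^T + S in
  let K := G *m H^T *m invmx C in
  H *m ((1%:M - K *m H) *m G *m (1%:M - K *m H)^T) *m H^T
  = S *m invmx C *m (H *m G *m H^T) *m invmx C *m S.
Proof.
move=> sS sG pG C K; have Cu : C \in unitmx by apply: C_unit.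
have sC : C^T = C by rewrite /C linearD /= !trmx_mul trmxK sG (spd_sym sS) mulmxA.
have HP : H *m (1%:M - K *m H) = S *m invmx C *m H.
  rewrite mulmxBr mulmx1 /K !mulmxA.
  have -> : H *m G *m H^T = C - S by rewrite /C addrK.
  by rewrite mulmxBl mulmxV // mulmxBl mul1mx opprB addrC subrK.
rewrite !mulmxA HP -mulmxA -trmx_mul HP.
by rewrite !trmx_mul trmx_inv sC (spd_sym sS) !mulmxA.
Qed.

Lemma eig_step n (A S : 'M[R]_n) (w : 'cV_n) (dl : R) :
  (A + S) \in unitmx -> 0 <= dl -> A *m w = dl *: (S *m w) ->
  S *m invmx (A + S) *m A *m invmx (A + S) *m S *m w
  = (dl / (1 + dl) ^+ 2) *: (S *m w).
Proof.
move=> Cu dl0 hA; set C := A + S.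
have d1 : 1 + dl != 0.
  have h : 0 < 1 + dl by lra.
  by rewrite gt_eqF.
have hC : invmx C *m S *m w = (1 + dl)^-1 *: w.
  have : C *m w = (1 + dl) *: (S *m w) by rewrite mulmxDl hA scalerDl scale1r addrC.
  move/(congr1 (mulmx (invmx C))); rewrite mulKmx // -scalemxAr => hw.
  by rewrite [in RHS]hw scalerA mulVf // scale1r mulmxA.
rewrite -!mulmxA [invmx C *m (S *m w)]mulmxA hC -!scalemxAr hA -!scalemxAr.
rewrite [invmx C *m (S *m w)]mulmxA hC -!scalemxAr !scalerA; congr (_ *: _).
by field.
Qed.

Definition fd (x : R) := x / (1 + x) ^+ 2.

Lemma fd_ge0 x : 0 <= x -> 0 <= fd x.
Proof. by move=> x0; rewrite /fd divr_ge0 // exprn_ge0 // addr_ge0. Qed.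

Lemma iter_fd_ge0 i x : 0 <= x -> 0 <= iter i fd x.
Proof. by move=> x0; elim: i => //= i IH; apply: fd_ge0. Qed.

Lemma eki_A_step n d J (H : 'M[R]_(n, d)) S y (v0 : 'I_J -> 'cV_d) i :
  (0 < J)%N -> spd S ->
  H *m eki_Gamma H S y v0 i.+1 *m H^T =
  S *m invmx (H *m eki_Gamma H S y v0 i *m H^T + S) *m (H *m eki_Gamma H S y v0 i *m H^T)
    *m invmx (H *m eki_Gamma H S y v0 i *m H^T + S) *m S.
Proof.
move=> J0 sS; rewrite /eki_Gamma /eki_iter iterS.
set v := iter i _ v0; set G := ens_cov v.
set K := G *m H^T *m invmx (H *m G *m H^T + S).
have -> : eki_step H S y v = fun j => (1%:M - K *m H) *m v j + K *m y.
  apply: functional_extensionality => j; rewrite /eki_step -/G -/K.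
  by rewrite mulmxBr mulmxBl mul1mx mulmxA addrA addrAC.
rewrite cov_affine //; apply: A_step => //; first exact: cov_sym.
exact: cov_psd.
Qed.

Lemma eki_eig n d J (H : 'M[R]_(n, d)) S y (v0 : 'I_J -> 'cV_d) (w : 'cV_n) dl :
  (0 < J)%N -> spd S -> 0 <= dl ->
  H *m eki_Gamma H S y v0 0 *m H^T *m w = dl *: (S *m w) ->
  forall i, H *m eki_Gamma H S y v0 i *m H^T *m w = iter i fd dl *: (S *m w).
Proof.
move=> J0 sS dl0 h0; elim=> // i IH.
rewrite eki_A_step // iterS; apply: eig_step => //.
  by apply: C_unit => //; exact: cov_psd.
exact: iter_fd_ge0.
Qed.

Lemma fd0 : fd 0 = 0.
Proof. by rewrite /fd mul0r. Qed.

Lemma iter_fd0 i : iter i fd 0 = 0.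
Proof. by elim: i => //= i ->; rewrite fd0. Qed.

Lemma fd_gt0 x : 0 < x -> 0 < fd x.
Proof.
move=> x0; rewrite /fd divr_gt0 // exprn_gt0 //; lra.
Qed.

Lemma iter_fd_gt0 i x : 0 < x -> 0 < iter i fd x.
Proof. by move=> x0; elim: i => //= i IH; apply: fd_gt0. Qed.

Lemma fd_le1 x : 0 <= x -> fd x <= 1.
Proof.
move=> x0; have h : 0 < (1 + x) ^+ 2 by rewrite exprn_gt0 //; lra.
rewrite /fd ler_pdivrMr // mul1r; nra.
Qed.

Lemma fd_mono a b : 0 <= a -> a <= b -> b <= 1 -> fd a <= fd b.
Proof.
move=> a0 ab b1.
have ha : 0 < (1 + a) ^+ 2 by rewrite exprn_gt0 //; lra.
have hb : 0 < (1 + b) ^+ 2 by rewrite exprn_gt0 //; lra.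
rewrite /fd ler_pdivrMr // mulrAC ler_pdivlMr //.
have h1 : a * b <= 1 by nra.
have h2 : 0 <= (b - a) * (1 - a * b) by apply: mulr_ge0; lra.
rewrite !expr2; nra.
Qed.

Lemma iter_fd_mono i a b : 0 <= a -> a <= b -> b <= 1 ->
  iter i fd a <= iter i fd b.
Proof.
elim: i a b => // i IH a b a0 ab b1; rewrite !iterSr; apply: IH.
- exact: fd_ge0.
- exact: fd_mono.
- by apply: fd_le1; apply: le_trans ab.
Qed.

Lemma iter_fd_order i a b : (1 <= i)%N -> 0 <= a -> 0 <= b -> fd a <= fd b ->
  iter i fd a <= iter i fd b.
Proof.
case: i => // i _ a0 b0 h; rewrite !iterSr; apply: iter_fd_mono => //.
- exact: fd_ge0.
- exact: fd_le1.
Qed.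

Lemma sort_ord h (g : 'I_h -> R) : exists s : 'I_h -> 'I_h,
  injective s /\ forall i j : 'I_h, (i <= j)%N -> g (s j) <= g (s i).
Proof.
set leT := fun a b : 'I_h => g b <= g a.
set e := sort leT (enum 'I_h).
have se : size e = h by rewrite size_sort size_enum_ord.
have ue : uniq e by rewrite sort_uniq enum_uniq.
have so : sorted leT e.
  by apply: sort_sorted => a b; rewrite /leT le_total.
exists (fun i => nth i e i); split.
  move=> i j; rewrite (set_nth_default i j) ?se //.
  by move/eqP; rewrite nth_uniq ?se // => /eqP/val_inj.
move=> i j ij; rewrite (set_nth_default i j) ?se //.
have := @sorted_leq_nth _ leT _ _ i e so i j; rewrite !inE se; apply => //.
- by move=> x y z; rewrite /leT => h1 h2; apply: le_trans h1.
- by move=> x; rewrite /leT.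
Qed.

Lemma card_downward n (P : pred 'I_n) :
  (forall l1 l2 : 'I_n, (l1 <= l2)%N -> P l2 -> P l1) ->
  forall l : 'I_n, P l = (l < #|P|)%N.
Proof.
move=> down l; apply/idP/idP => [Pl|].
  have le : (l.+1 <= n)%N := ltn_ord l.
  have := subset_leq_card (_ : [set widen_ord le x | x : 'I_l.+1] \subset P).
  rewrite card_imset ?card_ord; last by move=> x y /(congr1 val) /= /val_inj.
  apply; apply/subsetP => _ /imsetP [x _ ->]; apply: down Pl.
  by rewrite /= -ltnS ltn_ord.
apply: contraLR => nPl; rewrite -leqNgt.
have le : (l <= n)%N := ltnW (ltn_ord l).
have sub : P \subset [set widen_ord le x | x in [set: 'I_l]].
  apply/subsetP => k Pk.
  have kl : (k < l)%N.
    rewrite ltnNge; apply: contra nPl => lk; exact: down lk Pk.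
  by apply/imsetP; exists (Ordinal kl) => //; apply: val_inj.
apply: leq_trans (subset_leq_card sub) _.
by apply: leq_trans (leq_imset_card _ _) _; rewrite cardsT card_ord.
Qed.
End CL.

Unset Implicit Arguments.
Set Strict Implicit.
Set Printing Implicit Defensive.

Theorem proposition3p2 (R : realType) (n d h J : nat)
  (H : 'M[R]_(n, d)) (Sigma : 'M[R]_n) (y : 'cV[R]_n)
  (v0 : 'I_J -> 'cV[R]_d) :
  \rank H = h -> spd Sigma -> (2 <= J)%N ->
  exists (w : 'I_n -> 'cV[R]_n) (delta : 'I_n -> nat -> R),
    let r := #|[pred l : 'I_n | 0 < delta l 0%N]| in
    let W := \matrix_(l < n, k < n) w l k ord0 in
      (* {w_l} is a basis of R^n *)
      row_free W /\
      (* Sigma-orthogonality *)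
      (forall l k : 'I_n, l != k -> (w l)^T *m Sigma *m w k = 0) /\
      (* w_l is a generalized eigenvector of (H Gamma_i H^T, Sigma) for every i,
         with eigenvalue delta l i *)
      (forall (l : 'I_n) (i : nat),
          H *m eki_Gamma H Sigma y v0 i *m H^T *m w l = delta l i *: (Sigma *m w l)) /\
      (* zero stays zero, positive stays positive *)
      (forall l : 'I_n, delta l 0%N = 0 -> forall i, delta l i = 0) /\
      (forall l : 'I_n, 0 < delta l 0%N -> forall i, 0 < delta l i) /\
      (* (1) first r vectors: positive eigenvalues, ordered for all i >= 1 *)
      (forall l : 'I_n, (l < r)%N -> forall i, 0 < delta l i) /\
      (forall (i : nat) (l1 l2 : 'I_n), (1 <= i)%N -> (l1 <= l2)%N -> (l2 < r)%N ->
          delta l2 i <= delta l1 i) /\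
      (* (1),(2): r <= h, w_1..w_h in Ran(Sigma^-1 H); eigenvalue zero from r on *)
      [/\ (r <= h)%N,
          (forall l : 'I_n, (l < h)%N -> ((w l)^T <= (invmx Sigma *m H)^T)%MS),
          (forall l : 'I_n, (r <= l)%N -> forall i, delta l i = 0) &
          (* (3) w_{h+1}..w_n in Ker(H^T) *)
          (forall l : 'I_n, (h <= l)%N -> H^T *m w l = 0)] /\
      (* span(w_1..w_h) = Ran(Sigma^-1 H), span(w_{h+1}..w_n) = Ker(H^T) *)
      ((\sum_(l < n | (l < h)%N) <<(w l)^T>>)%MS == ((invmx Sigma *m H)^T)%MS)%MS /\
      ((\sum_(l < n | (h <= l)%N) <<(w l)^T>>)%MS == kermx H)%MS.
Proof.
move=> rH sS J2.
have J0 : (0 < J)%N by apply: leq_trans J2.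
have Su := spd_unit sS; have sSt := spd_sym sS.
set G0 := eki_Gamma H Sigma y v0 0.
have sG0 : G0^T = G0 by exact: cov_sym.
have pG0 : forall x : 'rV_d, 0 <= (x *m G0 *m x^T) 0 0 by move=> x; exact: cov_psd.
set M := H *m G0 *m H^T.
have sM : M^T = M by rewrite /M !trmx_mul trmxK sG0 mulmxA.
set U1 := (invmx Sigma *m H)^T.
have U1E : U1 = H^T *m invmx Sigma by rewrite /U1 trmx_mul trmx_inv sSt.
have rU1 : \rank U1 = h.
  by rewrite U1E mxrankMfree ?mxrank_tr // row_free_unit unitmx_inv.
have inv1 : (U1 *m M *m invmx Sigma <= U1)%MS.
  by rewrite U1E /M !mulmxA -mulmxA submxMl.
have [w1 [dl1 [w1n0 [w1U [hw1 ow1]]]]] :=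
  @G R n M Sigma sM sS h d U1 (eq_leq (esym rU1)) inv1.
set U2 := kermx H.
have rU2 : \rank U2 = (n - h)%N by rewrite mxrank_ker rH.
have inv2 : (U2 *m M *m invmx Sigma <= U2)%MS.
  by rewrite /M !mulmxA mulmx_ker !mul0mx sub0mx.
have [w2 [dl2 [w2n0 [w2U [_ ow2]]]]] :=
  @G R n M Sigma sM sS (n - h) n U2 (eq_leq (esym rU2)) inv2.
have w2H b : w2 b *m H = 0 by apply/sub_kermxP; exact: w2U b.
have cross : forall x z : 'rV_n, (x <= U1)%MS -> z *m H = 0 ->
    x *m Sigma *m z^T = 0.
  move=> x z /submxP [e ->] zH.
  by rewrite U1E -!mulmxA mulKmx // -trmx_mul zH trmx0 !mulmx0.
have dl1_ge0 a : 0 <= dl1 a.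
  have h1 := pG0 (w1 a *m H); have h2 := spd_row sS (w1n0 a).
  have e : (w1 a *m M *m (w1 a)^T) 0 0 = dl1 a * (w1 a *m Sigma *m (w1 a)^T) 0 0.
    by rewrite hw1 -scalemxAl mxE.
  rewrite /M !mulmxA in e; rewrite trmx_mul !mulmxA e in h1.
  by rewrite -(pmulr_lge0 _ h2).
have [s [sinj ssort]] := sort_ord (fun a => fd (dl1 a)).
pose Wr (l : 'I_n) : 'rV_n :=
  if (insub (val l) : option 'I_h) is Some a then w1 (s a)
  else if (insub (val l - h)%N : option 'I_(n - h)) is Some b then w2 b else 0.
pose D0 (l : 'I_n) : R :=
  if (insub (val l) : option 'I_h) is Some a then dl1 (s a) else 0.
have Wlt : forall l : 'I_n, (l < h)%N ->
    exists a : 'I_h, val a = val l /\ Wr l = w1 (s a) /\ D0 l = dl1 (s a).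
  move=> l lh; rewrite /Wr /D0; case: insubP => [a _ va|]; last by rewrite lh.
  by exists a.
have Wge : forall l : 'I_n, (h <= l)%N ->
    exists b : 'I_(n - h), val b = (l - h)%N /\ Wr l = w2 b /\ D0 l = 0.
  move=> l hl; rewrite /Wr /D0; case: insubP => [a ah _|_].
    by move: ah; rewrite ltnNge hl.
  case: insubP => [b _ vb|]; first by exists b.
  rewrite -leqNgt => nb; exfalso; move: nb hl; have := ltn_ord l; rewrite /=; lia.
have D0ge l : 0 <= D0 l.
  by case: (ltnP l h) => lh; [have [a [_ [_ ->]]] := Wlt l lh | have [b [_ [_ ->]]] := Wge l lh].
have Wn0 l : Wr l != 0.
  by case: (ltnP l h) => lh; [have [a [_ [-> _]]] := Wlt l lh | have [b [_ [-> _]]] := Wge l lh].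
have Weig l : Wr l *m M = D0 l *: (Wr l *m Sigma).
  case: (ltnP l h) => lh; first by have [a [_ [-> ->]]] := Wlt l lh.
  have [b [_ [-> ->]]] := Wge l lh.
  by rewrite /M !mulmxA w2H !mul0mx scale0r.
have Wsub (l : 'I_n) : (l < h)%N -> (Wr l <= U1)%MS.
  by move=> lh; have [a [_ [-> _]]] := Wlt l lh.
have WH (l : 'I_n) : (h <= l)%N -> Wr l *m H = 0.
  by move=> lh; have [b [_ [-> _]]] := Wge l lh.
have Worth (l k : 'I_n) : l != k -> Wr l *m Sigma *m (Wr k)^T = 0.
  move=> lk; case: (ltnP l h) => lh; case: (ltnP k h) => kh.
  - have [a [va [-> _]]] := Wlt l lh; have [a' [va' [-> _]]] := Wlt k kh.
    apply: ow1; apply: contra lk => /eqP /sinj ea.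
    by apply/eqP/val_inj; rewrite /= -va -va' ea.
  - by apply: cross; [exact: Wsub | exact: WH].
  - rewrite -[LHS]mx11_tr !trmx_mul trmxK sSt mulmxA.
    by apply: cross; [exact: Wsub | exact: WH].
  - have [b [vb [-> _]]] := Wge l lh; have [b' [vb' [-> _]]] := Wge k kh.
    apply: ow2; apply: contra lk => /eqP eb; apply/eqP/val_inj => /=.
    move: (congr1 val eb); rewrite vb vb'; move: lh kh; lia.
have Ppos (l : 'I_n) : 0 < D0 l -> (l < h)%N.
  move=> p; rewrite ltnNge; apply/negP => hl.
  by have [b [_ [_ e]]] := Wge l hl; move: p; rewrite e ltxx.
have down : forall l1 l2 : 'I_n, (l1 <= l2)%N -> 0 < D0 l2 -> 0 < D0 l1.
  move=> l1 l2 l12 p2; have l2h := Ppos _ p2.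
  have l1h : (l1 < h)%N by apply: leq_ltn_trans l2h.
  have [a1 [va1 [_ e1]]] := Wlt l1 l1h; have [a2 [va2 [_ e2]]] := Wlt l2 l2h.
  have := ssort a1 a2; rewrite va1 va2 => /(_ l12) /=.
  rewrite -e1 -e2 => hf; have := fd_gt0 p2 => hf2.
  rewrite lt0r D0ge andbT; apply/eqP => z.
  by move: (lt_le_trans hf2 hf); rewrite z fd0 ltxx.
pose P : pred 'I_n := fun l => 0 < D0 l.
have Pr : forall l : 'I_n, (0 < D0 l) = (l < #|P|)%N.
  move=> l; exact: (card_downward (P := P) down l).
exists (fun l => (Wr l)^T), (fun l i => iter i (@fd R) (D0 l)).
move=> r Wm.
have rE : r = #|P| by [].
rewrite -rE in Pr.
have rowW l : row l Wm = Wr l by apply/rowP => k; rewrite !mxE.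
have Wfree : row_free Wm.
  apply: free_of_inj => v hv; apply/rowP => l; rewrite mxE.
  have := congr1 (fun X => (X *m Sigma *m (Wr l)^T) 0 0) hv.
  rewrite /= !mul0mx [X in _ = X]mxE (mulmx_sum_row v Wm) !mulmx_suml summxE.
  rewrite (bigD1 l) //= big1 ?addr0; last first.
    by move=> k kl; rewrite rowW -!scalemxAl Worth // scaler0 mxE.
  rewrite rowW -!scalemxAl mxE => /eqP; rewrite mulf_eq0 => /orP [/eqP //|].
  by rewrite gt_eqF // (spd_row sS (Wn0 l)).
have rh : (r <= h)%N.
  rewrite leqNgt; apply/negP => hr.
  have rn : (r <= n)%N by rewrite rE; apply: leq_trans (max_card _) _; rewrite card_ord.
  have hn : (h < n)%N by apply: leq_trans rn.
  have [b [_ [_ e]]] := Wge (Ordinal hn) (leqnn h).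
  by move: (Pr (Ordinal hn)); rewrite e ltxx /= hr.
have Deig l i : H *m eki_Gamma H Sigma y v0 i *m H^T *m (Wr l)^T
    = iter i (@fd R) (D0 l) *: (Sigma *m (Wr l)^T).
  apply: eki_eig => //; have := congr1 trmx (Weig l).
  by rewrite trmx_mul sM linearZ /= trmx_mul sSt.
have D0z (l : 'I_n) : (r <= l)%N -> D0 l = 0.
  move=> rl; have : ~~ (0 < D0 l) by rewrite Pr -leqNgt.
  by rewrite lt0r D0ge andbT negbK => /eqP.
split; first exact: Wfree.
split; first by move=> l k lk; rewrite trmxK; exact: Worth.
split; first exact: Deig.
split; first by move=> l /= h0 i; rewrite h0 iter_fd0.
split; first by move=> l /= h0 i; exact: iter_fd_gt0.
split; first by move=> l lr i; apply: iter_fd_gt0; rewrite Pr.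
split.
  move=> i l1 l2 i1 l12 l2r.
  have p2 : 0 < D0 l2 by rewrite Pr.
  have l2h := Ppos _ p2.
  have l1h : (l1 < h)%N by apply: leq_ltn_trans l2h.
  have [a1 [va1 [_ e1]]] := Wlt l1 l1h; have [a2 [va2 [_ e2]]] := Wlt l2 l2h.
  rewrite e1 e2; apply: iter_fd_order => //; apply: ssort.
  by rewrite va1 va2.
split.
  split => //.
  - by move=> l lh; rewrite trmxK; exact: Wsub.
  - by move=> l rl i; rewrite D0z // iter_fd0.
  - by move=> l hl; rewrite -trmx_mul WH // trmx0.
set S1 := (\sum_(l < n | (l < h)%N) _)%MS.
set S2 := (\sum_(l < n | (h <= l)%N) _)%MS.
have S1U : (S1 <= U1)%MS.
  by apply/sumsmx_subP => l lh; rewrite genmxE trmxK; exact: Wsub.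
have S2U : (S2 <= U2)%MS.
  by apply/sumsmx_subP => l hl; rewrite genmxE trmxK; apply/sub_kermxP; exact: WH.
have WS : (Wm <= S1 + S2)%MS.
  apply/row_subP => l; rewrite rowW; case: (ltnP l h) => lh.
    apply: submx_trans (addsmxSl _ _); apply: (sumsmx_sup l) => //.
    by rewrite genmxE trmxK.
  apply: submx_trans (addsmxSr _ _); apply: (sumsmx_sup l) => //.
  by rewrite genmxE trmxK.
have rW : \rank Wm = n by apply/eqP.
have r12 := mxrankS WS; rewrite rW in r12.
have r12' := (mxrank_adds_leqif S1 S2).1.
have rS1 := mxrankS S1U; have rS2 := mxrankS S2U.
rewrite rU1 in rS1; rewrite rU2 in rS2.
have hn : (h <= n)%N by rewrite -rH rank_leq_row.
split.
  by rewrite -(mxrank_leqif_eq S1U).2 rU1; apply/eqP; lia.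
by rewrite -(mxrank_leqif_eq S2U).2 rU2; apply/eqP; lia.
Qed.
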